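(* An element $r\in\mathrm{Im}(1\otimes1-\tau)\subset\mathfrak{L}\otimes\mathfrak{L}$ satisfies the classical Yang–Baxter equation $c(r)=0$ if and only if it satisfies the modified Yang–Baxter equation $x\circ c(r)=0$ for all $x\in\mathfrak{L}$.
   Context: Let $\Gamma$ be a nontrivial additive subgroup of $\mathbb{R}$, and let $s\in\mathbb{R}$ with $2s\in\Gamma$. The Lie superalgebra $\mathfrak{L}$ over $\mathbb{C}$ has basis $\{L_p,I_p,G_r,H_r\mid p\in\Gamma,\ r\in s+\Gamma\}$. Here $L_p,I_p$ are even and $G_r,H_r$ are odd. The nonzero super-brackets are $[L_p,L_q]=(p-q)L_{p+q}$, $[L_p,I_q]=(p-q)I_{p+q}$, $[L_p,G_r]=(\tfrac p2-r)G_{p+r}$, $[L_p,H_r]=(\tfrac p2-r)H_{p+r}$, $[G_r,G_t]=I_{r+t}$, $[I_p,G_r]=(p-2r)H_{p+r}$. All other brackets of basis elements vanish, apart from those forced by super-antisymmetry. Conventions: - $[x]$ is the parity of $x$, and $\tau(x\otimes y)=(-1)^{[x][y]}y\otimes x$. - $\mathfrak{L}$ acts on tensor powers of itself by the diagonal adjoint action, e.g. $x\circ(a\otimes b)=[x,a]\otimes b+(-1)^{[x][a]}a\otimes[x,b]$, and similarly on triple tensors with the Koszul sign rule. For $r=\sum_i a_i\otimes b_i$ with homogeneous $a_i,b_i$, define $c(r)=\sum_{i,j}\Big((-1)^{[a_j][b_i]}[a_i,a_j]\otimes b_i\otimes b_j+a_i\otimes[b_i,a_j]\otimes b_j+(-1)^{[a_j][b_i]}a_i\otimes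 a_j\otimes[b_i,b_j]\Big)\in\mathfrak{L}^{\otimes3}$. *)

(* Defs.v *)
(* structure constants are real numbers, coefficients are complex
   numbers, modelled as pairs of Stdlib reals. *)
From Stdlib Require Import Reals List.
Import ListNotations.
Open Scope R_scope.

Record Cx := mkCx { Cre : R; Cim : R }.
Definition C0 : Cx := mkCx 0 0.
Definition RtoC (x : R) : Cx := mkCx x 0.
Definition Cadd (z w : Cx) : Cx := mkCx (Cre z + Cre w) (Cim z + Cim w).
Definition Cmul (z w : Cx) : Cx :=
  mkCx (Cre z * Cre w - Cim z * Cim w) (Cre z * Cim w + Cim z * Cre w).
Definition Copp (z : Cx) : Cx := mkCx (- Cre z) (- Cim z).

Definition is_add_subgroup (Gam : R -> Prop) : Prop :=
  Gam 0 /\ (forall x y, Gam x -> Gam y -> Gam (x + y)) /\ (forall x, Gam x -> Gam (- x)).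
Definition nontrivial_subgroup (Gam : R -> Prop) : Prop :=
  is_add_subgroup Gam /\ exists g, Gam g /\ g <> 0.

Inductive bas := bL (p : R) | bI (p : R) | bG (r : R) | bH (r : R).

(* parity: true = odd *)
Definition par (b : bas) : bool :=
  match b with bL _ | bI _ => false | bG _ | bH _ => true end.

Definition valid (Gam : R -> Prop) (s : R) (b : bas) : Prop :=
  match b with
  | bL p | bI p => Gam p
  | bG r | bH r => Gam (r - s)
  end.

Definition bas_eq_dec : forall x y : bas, {x = y} + {x <> y}.
Proof. decide equality; apply Req_EM_T. Defined.

Definition tri_eq_dec : forall x y : bas * bas * bas, {x = y} + {x <> y}.
Proof. decide equality; try apply bas_eq_dec; decide equality; apply bas_eq_dec. Defined.

Definition sgn (b : bool) : R := if b then -1 else 1.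

(** Super-bracket of basis elements, as a real linear combination of basis
    elements (all brackets, including those forced by super-antisymmetry). *)
Definition brb (x y : bas) : list (R * bas) :=
  match x, y with
  | bL p, bL q => [(p - q, bL (p + q))]
  | bL p, bI q => [(p - q, bI (p + q))]
  | bI q, bL p => [(- (p - q), bI (p + q))]
  | bL p, bG r => [(p / 2 - r, bG (p + r))]
  | bG r, bL p => [(- (p / 2 - r), bG (p + r))]
  | bL p, bH r => [(p / 2 - r, bH (p + r))]
  | bH r, bL p => [(- (p / 2 - r), bH (p + r))]
  | bG r, bG t => [(1, bI (r + t))]
  | bI p, bG r => [(p - 2 * r, bH (p + r))]
  | bG r, bI p => [(- (p - 2 * r), bH (p + r))]
  | _, _ => []
  end.

(** Elements of L, L(x)L, L(x)L(x)L as finite formal C-linear combinations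
    of (tensors of) basis elements. *)
Definition vec1 := list (Cx * bas).
Definition vec2 := list (Cx * (bas * bas)).
Definition vec3 := list (Cx * (bas * bas * bas)).

Definition valid1 Gam s (x : vec1) : Prop :=
  Forall (fun '(_, b) => valid Gam s b) x.
Definition valid2 Gam s (v : vec2) : Prop :=
  Forall (fun '(_, (a, b)) => valid Gam s a /\ valid Gam s b) v.

Definition coef3 (v : vec3) (t : bas * bas * bas) : Cx :=
  fold_right (fun '(c, u) acc => if tri_eq_dec u t then Cadd c acc else acc) C0 v.

Definition is_zero3 (v : vec3) : Prop := forall t, coef3 v t = C0.

Definition tau2 (v : vec2) : vec2 :=
  map (fun '(c, (a, b)) => (Cmul c (RtoC (sgn (par a && par b))), (b, a))) v.
Definition one_minus_tau (v : vec2) : vec2 :=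
  v ++ map (fun '(c, u) => (Copp c, u)) (tau2 v).

Definition act3b (x : bas) (t : bas * bas * bas) : list (R * (bas * bas * bas)) :=
  let '(a, b, c) := t in
  map (fun '(k, d) => (k, (d, b, c))) (brb x a) ++
  map (fun '(k, d) => (sgn (par x && par a) * k, (a, d, c))) (brb x b) ++
  map (fun '(k, d) => (sgn (par x && xorb (par a) (par b)) * k, (a, b, d))) (brb x c).

Definition act3 (x : vec1) (v : vec3) : vec3 :=
  flat_map (fun '(al, xb) =>
    flat_map (fun '(be, t) =>
      map (fun '(k, u) => (Cmul (Cmul al be) (RtoC k), u)) (act3b xb t)) v) x.

Definition cterms (ai bi aj bj : bas) : list (R * (bas * bas * bas)) :=
  map (fun '(k, d) => (sgn (par aj && par bi) * k, (d, bi, bj))) (brb ai aj) ++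
  map (fun '(k, d) => (k, (ai, d, bj))) (brb bi aj) ++
  map (fun '(k, d) => (sgn (par aj && par bi) * k, (ai, aj, d))) (brb bi bj).

Definition cYB (r : vec2) : vec3 :=
  flat_map (fun '(ali, (ai, bi)) =>
    flat_map (fun '(alj, (aj, bj)) =>
      map (fun '(k, u) => (Cmul (Cmul ali alj) (RtoC k), u)) (cterms ai bi aj bj)) r) r.

(* Main.v *)
Require Import Defs.
From Stdlib Require Import Reals List Lra Classical.
Import ListNotations.
Open Scope R_scope.

Definition C1 := mkCx 1 0.
Definition Csub z w := Cadd z (Copp w).
Lemma Cext : forall a b c d, a = c -> b = d -> mkCx a b = mkCx c d.
Proof. congruence. Qed.
Lemma Cring : ring_theory C0 C1 Cadd Cmul Csub Copp (@eq Cx).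
Proof.
  split; intros; repeat match goal with z : Cx |- _ => destruct z end;
  unfold Csub, Cadd, Cmul, Copp, C0, C1; simpl; apply Cext; ring.
Qed.
Add Ring CxRing : Cring.

Definition sumD (D : list (bas*bas*bas)) (f : bas*bas*bas -> Cx) : Cx :=
  fold_right (fun d acc => Cadd (f d) acc) C0 D.

Lemma sumD_ext D f g : (forall d, In d D -> f d = g d) -> sumD D f = sumD D g.
Proof.
  induction D as [|a D IH]; intros H; simpl; auto.
  rewrite H by (left; auto). rewrite IH; auto. intros; apply H; right; auto.
Qed.
Lemma sumD_add D f g : sumD D (fun d => Cadd (f d) (g d)) = Cadd (sumD D f) (sumD D g).
Proof. induction D as [|a D IH]; simpl. ring. rewrite IH; ring. Qed.
Lemma sumD_zero D f : (forall d, In d D -> f d = C0) -> sumD D f = C0.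
Proof.
  induction D as [|a D IH]; intros H; simpl; auto.
  rewrite H by (left; auto). rewrite IH. ring. intros; apply H; right; auto.
Qed.
Lemma sumD_single D f u : NoDup D -> In u D ->
  (forall d, In d D -> d <> u -> f d = C0) -> sumD D f = f u.
Proof.
  induction D as [|a D IH]; intros ND Hu H; [destruct Hu|].
  inversion ND; subst. simpl.
  destruct Hu as [<-|Hu].
  - rewrite sumD_zero. ring. intros d Hd; apply H; [right; auto|].
    intro; subst; contradiction.
  - rewrite H; [|left; auto|intro; subst; contradiction].
    rewrite IH; auto. ring. intros; apply H; auto. right; auto.
Qed.

Lemma coef3_nil T : coef3 [] T = C0.
Proof. reflexivity. Qed.
Lemma coef3_cons c u v T : coef3 ((c,u)::v) T =
  if tri_eq_dec u T then Cadd c (coef3 v T) else coef3 v T.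
Proof. reflexivity. Qed.
Lemma coef3_app a b T : coef3 (a ++ b) T = Cadd (coef3 a T) (coef3 b T).
Proof.
  induction a as [|[c u] a IH]; simpl app.
  - rewrite coef3_nil; ring.
  - rewrite !coef3_cons. destruct tri_eq_dec; rewrite IH; ring.
Qed.
Lemma coef3_scale c l T :
  coef3 (map (fun '(k,u) => (Cmul c (RtoC k), u)) l) T =
  Cmul c (coef3 (map (fun '(k,u) => (RtoC k, u)) l) T).
Proof.
  induction l as [|[k u] l IH]; simpl map.
  - rewrite coef3_nil; ring.
  - rewrite !coef3_cons. destruct tri_eq_dec; rewrite IH; ring.
Qed.

Definition Kf (F : bas*bas*bas -> list (R*(bas*bas*bas))) T u : Cx :=
  coef3 (map (fun '(k,w) => (RtoC k, w)) (F u)) T.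

Lemma coef_apply F al v D T : NoDup D -> (forall u, In u (map snd v) -> In u D) ->
  coef3 (flat_map (fun '(be,t) => map (fun '(k,u) => (Cmul (Cmul al be) (RtoC k), u)) (F t)) v) T
  = sumD D (fun d => Cmul (Cmul al (coef3 v d)) (Kf F T d)).
Proof.
  intros ND; induction v as [|[be t] v IH]; intros Hin.
  - simpl flat_map. rewrite coef3_nil. symmetry; apply sumD_zero; intros.
    rewrite coef3_nil; ring.
  - change (flat_map (fun '(be,t) => map (fun '(k,u) => (Cmul (Cmul al be) (RtoC k), u)) (F t)) ((be,t)::v))
      with (map (fun '(k,u) => (Cmul (Cmul al be) (RtoC k), u)) (F t) ++
            flat_map (fun '(be,t) => map (fun '(k,u) => (Cmul (Cmul al be) (RtoC k), u)) (F t)) v).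
    rewrite coef3_app, coef3_scale, IH by (intros; apply Hin; simpl; auto).
    transitivity (sumD D (fun d => Cadd (if tri_eq_dec t d then Cmul (Cmul al be) (Kf F T d) else C0)
                                     (Cmul (Cmul al (coef3 v d)) (Kf F T d)))).
    + rewrite sumD_add. f_equal. rewrite (sumD_single D _ t ND).
      * destruct tri_eq_dec; [|congruence]. reflexivity.
      * apply Hin; simpl; auto.
      * intros d _ H; destruct tri_eq_dec; congruence.
    + apply sumD_ext; intros d _. rewrite coef3_cons. destruct tri_eq_dec; ring.
Qed.

Lemma act3_nil v : act3 [] v = [].
Proof. reflexivity. Qed.
Lemma act3_cons al xb x v : act3 ((al,xb)::x) v =
  flat_map (fun '(be,t) => map (fun '(k,u) => (Cmul (Cmul al be) (RtoC k), u)) (act3b xb t)) v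
  ++ act3 x v.
Proof. reflexivity. Qed.

Lemma act3_zero x v : is_zero3 v -> is_zero3 (act3 x v).
Proof.
  intros Hz T. induction x as [|[al xb] x IH]; [reflexivity|].
  rewrite act3_cons, coef3_app, IH.
  rewrite (coef_apply _ al v (nodup tri_eq_dec (map snd v)) T).
  - rewrite sumD_zero. ring. intros d _. rewrite Hz. ring.
  - apply NoDup_nodup.
  - intros u Hu; apply nodup_In; auto.
Qed.

Definition idx (b:bas) := match b with bL q|bI q|bG q|bH q => q end.
Definition sh p b := match b with bL q => bL (p+q) | bI q => bI (p+q)
  | bG q => bG (p+q) | bH q => bH (p+q) end.
Definition kap p b := match b with bL q | bI q => p - q | bG q | bH q => p/2 - q end.
Lemma brb_Lp p b : brb (bL p) b = [(kap p b, sh p b)].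
Proof. destruct b; reflexivity. Qed.
Lemma act3b_Lp p a b c : act3b (bL p) (a,b,c) =
  [(kap p a, (sh p a, b, c)); (1 * kap p b, (a, sh p b, c)); (1*kap p c, (a,b,sh p c))].
Proof. unfold act3b; rewrite !brb_Lp; reflexivity. Qed.
Lemma idx_sh p a : idx (sh p a) = p + idx a.
Proof. destruct a; reflexivity. Qed.
Lemma sh_inj p a a' : sh p a = sh p a' -> a = a'.
Proof. destruct a, a'; simpl; intro E; inversion E; f_equal; lra. Qed.

Definition fidx (t : bas*bas*bas) := let '(a,_,_) := t in idx a.

Lemma Kf_other p a b c d : 0 < p -> fidx d <= idx a -> d <> (a,b,c) ->
  Kf (act3b (bL p)) (sh p a, b, c) d = C0.
Proof.
  destruct d as [[a' b'] c']; simpl fidx; intros Hp Hle Hne.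
  unfold Kf; rewrite act3b_Lp; simpl map. rewrite !coef3_cons, coef3_nil.
  destruct (tri_eq_dec (sh p a', b', c') (sh p a, b, c)) as [E|_].
  { inversion E as [[E1 E2 E3]]. apply sh_inj in E1. subst. congruence. }
  destruct (tri_eq_dec (a', sh p b', c') (sh p a, b, c)) as [E|_].
  { inversion E as [[E1 E2 E3]]. subst. rewrite idx_sh in Hle. lra. }
  destruct (tri_eq_dec (a', b', sh p c') (sh p a, b, c)) as [E|_].
  { inversion E as [[E1 E2 E3]]. subst. rewrite idx_sh in Hle. lra. }
  reflexivity.
Qed.

Lemma Kf_self p a b c : 0 < p ->
  Kf (act3b (bL p)) (sh p a, b, c) (a,b,c) = RtoC (kap p a).
Proof.
  intros Hp.
  unfold Kf; rewrite act3b_Lp; simpl map. rewrite !coef3_cons, coef3_nil.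
  destruct (tri_eq_dec (sh p a, b, c) (sh p a, b, c)) as [_|N]; [|congruence].
  destruct (tri_eq_dec (a, sh p b, c) (sh p a, b, c)) as [E|_].
  { assert (H := f_equal (fun t => idx (fst (fst t))) E). simpl in H. rewrite idx_sh in H. lra. }
  destruct (tri_eq_dec (a, b, sh p c) (sh p a, b, c)) as [E|_].
  { assert (H := f_equal (fun t => idx (fst (fst t))) E). simpl in H. rewrite idx_sh in H. lra. }
  ring.
Qed.

Lemma Ceq_dec : forall z w : Cx, {z = w} + {z <> w}.
Proof. decide equality; apply Req_EM_T. Defined.

Lemma max_exists (l : list (bas*bas*bas)) : l <> [] ->
  exists t0, In t0 l /\ forall u, In u l -> fidx u <= fidx t0.
Proof.
  induction l as [|a l IH]; intros H; [congruence|].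
  destruct l as [|b l'].
  - exists a; split; [left; auto|]; intros u [<-|[]]; lra.
  - destruct IH as [t0 [Hi Hm]]; [discriminate|].
    destruct (Rle_dec (fidx a) (fidx t0)).
    + exists t0; split; [right; auto|]. intros u [<-|Hu]; auto.
    + exists a; split; [left; auto|]. intros u [<-|Hu]; [lra|].
      specialize (Hm u Hu); lra.
Qed.

Lemma coef3_notin v t : ~ In t (map snd v) -> coef3 v t = C0.
Proof.
  induction v as [|[c u] v IH]; intros H; [reflexivity|]. rewrite coef3_cons.
  destruct tri_eq_dec.
  - subst; simpl in H; tauto.
  - apply IH; simpl in H; tauto.
Qed.

Lemma choose_p Gam i : nontrivial_subgroup Gam ->
  exists p, Gam p /\ 0 < p /\ p <> i /\ p <> 2*i.
Proof.
  intros [[H0 [Hadd Hneg]] [g [Hg Hg0]]].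
  assert (exists q, Gam q /\ 0 < q) as [q [Hq Hq0]].
  { destruct (Rlt_dec 0 g). exists g; auto. exists (-g); split; auto; lra. }
  destruct (Req_EM_T q i); destruct (Req_EM_T q (2*i)).
  - exists (q+q+q); repeat split; auto; lra.
  - exists (q+q+q); repeat split; auto; lra.
  - exists (q+q+q); repeat split; auto; lra.
  - exists q; auto.
Qed.

Lemma Cmul_cancel z k : k <> 0 -> Cmul (Cmul C1 z) (RtoC k) = C0 -> z = C0.
Proof.
  destruct z as [x y]; unfold Cmul, C1, RtoC, C0; simpl; intros Hk E.
  injection E as E1 E2.
  assert (x * k = 0) by nra. assert (y * k = 0) by nra.
  apply Cext.
  - destruct (Rmult_integral _ _ H); [auto|contradiction].
  - destruct (Rmult_integral _ _ H0); [auto|contradiction].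
Qed.

Lemma rev_dir Gam s v : nontrivial_subgroup Gam ->
  (forall x, valid1 Gam s x -> is_zero3 (act3 x v)) -> is_zero3 v.
Proof.
  intros HG Hx.
  destruct (classic (exists t, coef3 v t <> C0)) as [Hex|Hno].
  2: { intros t; apply NNPP; intro; apply Hno; eauto. }
  exfalso.
  set (S := filter (fun u => if Ceq_dec (coef3 v u) C0 then false else true) (map snd v)).
  assert (HS : S <> []).
  { destruct Hex as [t Ht]. assert (In t S).
    { apply filter_In; split.
      - apply NNPP; intro Hn; apply Ht, coef3_notin; auto.
      - destruct Ceq_dec; congruence. }
    intro E; rewrite E in H; auto. }
  destruct (max_exists S HS) as [t0 [Ht0 Hmax]].
  pose proof Ht0 as Ht0'.
  apply filter_In in Ht0 as [Ht0v Ht0c].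
  destruct t0 as [[a b] c].
  destruct (choose_p Gam (idx a) HG) as [p [Hp [Hp0 [Hp1 Hp2]]]].
  assert (Hv : valid1 Gam s [(C1, bL p)]) by (constructor; [exact Hp| constructor]).
  specialize (Hx _ Hv (sh p a, b, c)).
  rewrite act3_cons, act3_nil, app_nil_r in Hx.
  rewrite (coef_apply _ C1 v (nodup tri_eq_dec (map snd v))) in Hx;
    [|apply NoDup_nodup|intros u Hu; apply nodup_In; auto].
  rewrite (sumD_single _ _ (a,b,c)) in Hx.
  - rewrite Kf_self in Hx by auto.
    apply Cmul_cancel in Hx.
    + destruct Ceq_dec; congruence.
    + destruct a; simpl in *; lra.
  - apply NoDup_nodup.
  - apply nodup_In; auto.
  - intros d Hd Hne.
    destruct (Ceq_dec (coef3 v d) C0) as [E|E].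
    + rewrite E; ring.
    + rewrite Kf_other; auto. ring.
      apply (Hmax d). apply filter_In; split.
      * apply nodup_In in Hd; auto.
      * destruct (Ceq_dec (coef3 v d) C0); [contradiction|reflexivity].
Qed.

Theorem mainTheorem5 (Gam : R -> Prop) (s : R)
  (HGam : nontrivial_subgroup Gam) (Hs : Gam (2 * s))
  (t : vec2) (Ht : valid2 Gam s t) :
  let r := one_minus_tau t in
  is_zero3 (cYB r) <->
  (forall x : vec1, valid1 Gam s x -> is_zero3 (act3 x (cYB r))).
Proof.
  intros r. split.
  - intros Hz x _. apply act3_zero; auto.
  - apply rev_dir; auto.
Qed.
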